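(* Let $f\in\operatorname{Diff}^1(\mathbb{T}^3)$ be partially hyperbolic with $L_f$ Anosov, and let $F:\mathbb{R}^3\to\mathbb{R}^3$ be a lift of $f$. Then for every $g\in\mathcal{C}^1(f)$ there exist an integer $0<l\le|\det(L_f-\mathrm{Id}_{\mathbb{R}^3})|$ and a lift $\widehat G$ of $g^l$ to $\mathbb{R}^3$ such that $F\circ\widehat G=\widehat G\circ F$. Moreover, if $g$ is homotopic to the identity, $l$ can be chosen to be a divisor of $|\det(L_f-\mathrm{Id}_{\mathbb{R}^3})|$.
   Context: Partially hyperbolic: $Df$-invariant continuous splitting $T\mathbb{T}^3=E^s\oplus E^c\oplus E^u$ ($E^s,E^u$ nontrivial) with, for some $N$ and all $x$, $\|Df^N|_{E^s(x)}\|\le 1/2$, $\|Df^{-N}|_{E^u(x)}\|\le 1/2$, $\|Df^N|_{E^s(x)}\|\|Df^{-N}|_{E^c(f^Nx)}\|\le1/2$, $\|Df^N|_{E^c(x)}\|\|Df^{-N}|_{E^u(f^Nx)}\|\le 1/2$. $L_f\in GL(3,\mathbb{Z})$ is the linear part of $f$ (action on $\pi_1(\mathbb{T}^3)=\mathbb{Z}^3$); Anosov = no eigenvalue of modulus $1$. A lift of $f$ is a map $F:\mathbb{R}^3\to\mathbb{R}^3$ with $\pi\circ F=f\circ\pi$, $\pi:\mathbb{R}^3\to\mathbb{T}^3$ the covering. $\mathcal{C}^1(f)=\{g\in\operatorname{Diff}^1(\mathbb{T}^3): gf=fg\}$. *)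

(* Defs.v *)
From HB Require Import structures.
From mathcomp Require Import all_boot all_order all_algebra.
From mathcomp Require Import algC.
From mathcomp Require Import all_classical all_reals all_analysis.
Set Implicit Arguments. Unset Strict Implicit. Unset Printing Implicit Defensive.
Import Order.TTheory GRing.Theory Num.Theory.
Import numFieldNormedType.Exports.
Local Open Scope classical_set_scope.
Local Open Scope ring_scope.

(* The 3-torus is R^3 / Z^3 with its flat metric; points of R^3 are row
   vectors 'rV[R]_3.  A self-map h of T^3 is handled through a lift
   H : R^3 -> R^3 (pi \o H = h \o pi); two maps H, H' are lifts of the same
   torus map iff H x - H' x is in Z^3 for every x.  The tangent bundle of
   T^3 is trivialised: T_{pi x} T^3 = R^3 and Dh(pi x) = DH(x). *)

Section Torus.
Variable R : realType.
Local Notation vec := 'rV[R]_3.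

Definition intvec (v : vec) : Prop := forall i, v ord0 i \is a Num.int.

Definition descends (H : vec -> vec) : Prop :=
  forall x n, intvec n -> intvec (H (x + n) - H x).

Definition same_torus_map (H K : vec -> vec) : Prop :=
  forall x, intvec (H x - K x).

(* Jacobian matrix (row-vector convention: v |-> v *m Jac H x) *)
Definition Jac (H : vec -> vec) (x : vec) : 'M[R]_3 := lin1_mx ('d H x).

Definition C1 (H : vec -> vec) : Prop :=
  (forall x, differentiable H x) /\ continuous (fun x => Jac H x).

Definition diff1_lift_inv (H Hinv : vec -> vec) : Prop :=
  [/\ cancel H Hinv, cancel Hinv H, C1 H /\ C1 Hinv & descends H /\ descends Hinv].

Definition diff1_lift (H : vec -> vec) : Prop := exists Hinv, diff1_lift_inv H Hinv.

(* L is the linear part (action on pi_1 T^3 = Z^3) of the torus map lifted by H *)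
Definition linear_part (H : vec -> vec) (L : 'M[int]_3) : Prop :=
  forall x (n : 'rV[int]_3),
    H (x + map_mx intr n) = H x + map_mx intr (n *m L).

Definition anosov_mx (L : 'M[int]_3) : Prop :=
  forall z : algC, `|z| = 1 -> ~ eigenvalue (map_mx (intr : int -> algC) L) z.

Definition enorm (v : vec) : R := Num.sqrt (\sum_i v ord0 i ^+ 2).

Definition rnorm (A E : 'M[R]_3) : R :=
  sup [set enorm (v *m A) | v in [set v : vec | (v <= E)%MS /\ enorm v = 1]].

(* continuity of a subbundle x |-> E x of the (trivial) tangent bundle:
   local continuous frames *)
Definition cont_subbundle (E : vec -> 'M[R]_3) : Prop :=
  forall x : vec, exists k (B : vec -> 'M[R]_(k, 3)),
    continuous B /\
    \forall y \near x, row_free (B y) /\ (B y == E y)%MS.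

Definition periodic_bundle (E : vec -> 'M[R]_3) : Prop :=
  forall x n, intvec n -> (E (x + n)%R == E x)%MS.

Definition invariant_bundle (H : vec -> vec) (E : vec -> 'M[R]_3) : Prop :=
  forall x, (E x *m Jac H x == E (H x))%MS.

Definition part_hyp_inv (H Hinv : vec -> vec) : Prop :=
  exists (Es Ec Eu : vec -> 'M[R]_3) (N : nat),
  [/\ [/\ periodic_bundle Es, periodic_bundle Ec & periodic_bundle Eu] /\
      [/\ cont_subbundle Es, cont_subbundle Ec & cont_subbundle Eu],
      (forall x, mxdirect (Es x + Ec x + Eu x) /\ (Es x + Ec x + Eu x == 1%:M)%MS),
      (forall x, \rank (Es x) != 0%N /\ \rank (Eu x) != 0%N),
      [/\ invariant_bundle H Es, invariant_bundle H Ec & invariant_bundle H Eu] &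
      forall x,
      [/\ rnorm (Jac (iter N H) x) (Es x) <= 2^-1,
          rnorm (Jac (iter N Hinv) x) (Eu x) <= 2^-1,
          rnorm (Jac (iter N H) x) (Es x)
            * rnorm (Jac (iter N Hinv) (iter N H x)) (Ec (iter N H x)) <= 2^-1 &
          rnorm (Jac (iter N H) x) (Ec x)
            * rnorm (Jac (iter N Hinv) (iter N H x)) (Eu (iter N H x)) <= 2^-1]].

Definition part_hyp (H : vec -> vec) : Prop :=
  exists Hinv, diff1_lift_inv H Hinv /\ part_hyp_inv H Hinv.

Definition homotopic_to_id (G : vec -> vec) : Prop :=
  exists Hom : R * vec -> vec,
    [/\ {within [set p : R * vec | 0 <= p.1 <= 1], continuous Hom},
        (forall t, 0 <= t <= 1 -> descends (fun x => Hom (t, x))),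
        same_torus_map (fun x => Hom (0, x)) id &
        same_torus_map (fun x => Hom (1, x)) G].

End Torus.

(* Main.v *)
Require Import Defs.
From HB Require Import structures.
From mathcomp Require Import all_boot all_order all_algebra.
From mathcomp Require Import algC.
From mathcomp Require Import all_classical all_reals all_analysis.
From mathcomp Require Import zify lra.
Import Order.TTheory GRing.Theory Num.Theory.
Import numFieldNormedType.Exports.
Local Open Scope classical_set_scope.
Local Open Scope ring_scope.
Set Implicit Arguments. Unset Strict Implicit. Unset Printing Implicit Defensive.
Lemma within_comp_pt {T U V : topologicalType} (A : set T) (B : set U) (e : T -> U) (f : U -> V) :
  continuous e -> (forall t, A t -> B (e t)) -> {within B, continuous f} ->
  {within A, continuous (f \o e)}.
Proof.
move=> ce AB cf; apply/subspace_continuousP => t At.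
have := (@subspace_continuousP _ B _ f).1 cf (e t) (AB _ At).
apply: cvg_trans => P /= hP.
rewrite /within /= in hP *.
move: (ce t _ hP) => h.
change (nbhs t (fun s => A s -> P (f (e s)))).
have hh : nbhs t (fun s => B (e s) -> P (f (e s))) := h.
exact: (@filterS T (nbhs t) _ _ _ (fun s h1 As => h1 (AB s As)) hh).
Qed.
Lemma unit_int_abs (x : int) : x \is a GRing.unit -> `|x|%N = 1%N.
Proof.
case/unitrP => y [h _]; have := congr1 absz h; rewrite abszM /= => /eqP.
by rewrite muln_eq1 => /andP[_ /eqP].
Qed.

Lemma mod_lt (s x : int) : s != 0 -> (`|(x %% s)%Z|%N < `|s|%N)%N.
Proof.
move=> s0; have := ltz_mod x s0; have := modz_ge0 x s0.
move=> h1 h2; rewrite -ltz_nat gez0_abs // abszE //.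
Qed.

Lemma mod_eq_abs (s p q : int) : s != 0 ->
  `|(p %% s)%Z|%N = `|(q %% s)%Z|%N -> (s %| p - q)%Z.
Proof.
move=> s0 h; rewrite -eqz_mod_dvd; apply/eqP.
by rewrite -[LHS]gez0_abs ?modz_ge0 // -[RHS]gez0_abs ?modz_ge0 // h.
Qed.

Lemma ord3_cases (j : 'I_3) : j = 0 \/ j = 1 \/ j = 2%:R.
Proof.
case: j => [[|[|[|//]]] hj]; [left|right;left|right;right]; exact: val_inj.
Qed.

Lemma mxB_entry (x y : 'rV[int]_3) j : (x - y) ord0 j = x ord0 j - y ord0 j.
Proof. by rewrite !mxE. Qed.

Lemma smith_classify (A : 'M[int]_3) : \det A != 0 ->
  exists (T : finType) (cls : 'rV[int]_3 -> T), #|T| = `|\det A|%N /\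
    forall a b, cls a = cls b -> exists k, a - b = k *m A.
Proof.
move=> dA.
have [P uP [Q uQ [s _ eA]]] := int_Smith_normal_form A.
set D := \matrix_(i, j) _ in eA.
have eD : D = diag_mx (\row_i s`_i).
  by apply/matrixP => i j; rewrite !mxE.
have detD : \det D = s`_0 * s`_1 * s`_2.
  rewrite eD det_diag !big_ord_recl big_ord0 !mxE mulr1 mulrA //.
have detA : \det A = \det P * (s`_0 * s`_1 * s`_2) * \det Q.
  by rewrite eA !det_mulmx detD.
have snz : forall i : 'I_3, s`_i != 0.
  move=> i; apply: contraNneq dA => si0.
  by rewrite eA !det_mulmx eD det_diag (bigD1 i) //= mxE si0 !mul0r mulr0 mul0r.
pose u (a : 'rV[int]_3) := a *m invmx Q.
pose T := ('I_`|s`_0| * 'I_`|s`_1| * 'I_`|s`_2|)%type.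
pose cls (a : 'rV[int]_3) : T :=
  (Ordinal (mod_lt (u a 0 0) (snz 0)), Ordinal (mod_lt (u a 0 1) (snz 1)),
   Ordinal (mod_lt (u a 0 2) (snz 2))).
exists T, cls; split.
  have uP' : \det P \is a GRing.unit by rewrite -unitmxE.
  have uQ' : \det Q \is a GRing.unit by rewrite -unitmxE.
  rewrite card_prod card_prod !card_ord detA !abszM.
  by rewrite (unit_int_abs uP') (unit_int_abs uQ') mul1n muln1.
move=> a b [h0 h1 h2].
pose t := (a - b) *m invmx Q.
have hdiv : forall j : 'I_3, (s`_j %| t ord0 j)%Z.
  move=> j; rewrite /t mulmxBl mxB_entry.
  case: (ord3_cases j) => [->|[->|->]].
  - exact: (mod_eq_abs (snz 0) h0).
  - exact: (mod_eq_abs (snz 1) h1).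
  - exact: (mod_eq_abs (snz 2%:R) h2).
pose t' := \row_j ((t ord0 j) %/ s`_j)%Z.
exists (t' *m invmx P).
rewrite eA !mulmxA mulmxKV //.
have -> : t' *m D = t.
  apply/matrixP => i j; rewrite [i]ord1 eD mul_mx_diag.
  by move: (hdiv j); rewrite !mxE => /divzK.
by rewrite /t mulmxKV.
Qed.
Lemma pigeon (A : 'M[int]_3) (c : nat -> 'rV[int]_3) : \det A != 0 ->
  exists i j, (i < j <= `|\det A|)%N /\ exists k, c j - c i = k *m A.
Proof.
move=> dA; have [T [cls [cT hcls]]] := smith_classify dA.
pose f (i : 'I_(`|\det A|).+1) := cls (c i).
have : ~~ injectiveb f.
  apply/negP => /injectiveP inj; have := leq_card f inj.
  by rewrite card_ord cT ltnn.
case/injectivePn => i [j neq fij].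
have [lij|lji|eij] := ltngtP i j.
- exists i, j; split; first by rewrite lij -ltnS ltn_ord.
  exact: hcls (esym fij).
- exists j, i; split; first by rewrite lji -ltnS ltn_ord.
  exact: hcls fij.
- by move: neq; rewrite (val_inj eij) eqxx.
Qed.

Lemma anosov_det (L : 'M[int]_3) : anosov_mx L -> \det (L - 1%:M) != 0.
Proof.
move=> an; apply/negP => /eqP h.
apply: (an 1); first exact: normr1.
apply/eigenvalueP.
have : \det (map_mx (intr : int -> algC) (L - 1%:M)) == 0.
  by rewrite det_map_mx h rmorph0.
case/det0P => v vnz hv; exists v => //.
move: hv; rewrite map_mxB map_mx1 mulmxBr mulmx1 scale1r => /eqP.
by rewrite subr_eq0 => /eqP.
Qed.
Section Aux.
Variable R : realType.
Local Notation vec := 'rV[R]_3.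

Lemma int_lt_add1 (x y : R) : x \is a Num.int -> y \is a Num.int -> x < y -> x + 1 <= y.
Proof.
move=> /intrP[m ->] /intrP[n ->]; rewrite ltr_int => mn.
rewrite -[1]/(1%:~R) -rmorphD /= ler_int; lia.
Qed.

Lemma half_not_int : ~ ((2^-1 : R) \is a Num.int).
Proof.
move=> /intrP[m hm].
have : ((m * 2)%:~R : R) = 1 by rewrite intrM -hm mulVf // pnatr_eq0.
move/eqP; rewrite -[1 : R]/(1%:~R) eqr_int => /eqP; lia.
Qed.

Lemma cont01_int_const (f : R -> R) :
  {within `[0, 1], continuous f} ->
  (forall t, t \in `[0, 1] -> f t \is a Num.int) -> f 0 = f 1.
Proof.
move=> cf fi.
have i0 : f 0 \is a Num.int by apply: fi; rewrite in_itv /= lexx ler01.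
have i1 : f 1 \is a Num.int by apply: fi; rewrite in_itv /= lexx ler01.
have [//|neq] := eqVneq (f 0) (f 1).
have key : forall a b : R, a \is a Num.int -> Num.min (f 0) (f 1) = a ->
   a + 1 <= Num.max (f 0) (f 1) -> False.
  move=> a b ia hmin hmax.
  have hv : Num.min (f 0) (f 1) <= a + 2^-1 <= Num.max (f 0) (f 1).
    rewrite hmin lerDl invr_ge0 ler0n /=.
    apply: le_trans hmax; rewrite lerD2l invf_le1 ?ler1n //.
  have [c c01 fc] := IVT ler01 cf hv.
  apply: half_not_int.
  have -> : (2^-1 : R) = f c - a by rewrite fc addrAC subrr add0r.
  by rewrite rpredB // fi.
exfalso; case: (ltgtP (f 0) (f 1)) neq => // h _.
  apply: (key (f 0) 0) => //; first by rewrite min_l // (ltW h).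
  by rewrite max_r ?(ltW h) //; apply: int_lt_add1.
apply: (key (f 1) 0) => //; first by rewrite min_r // (ltW h).
by rewrite max_l ?(ltW h) //; apply: int_lt_add1.
Qed.

Lemma cont_int_vec_const (h : vec -> vec) :
  continuous h -> (forall x, intvec (h x)) -> forall x y, h x = h y.
Proof.
move=> ch hi x y; apply/matrixP => i j; rewrite [i]ord1.
pose f := fun t : R => (h (x + t *: (y - x)) ord0 j : R).
have cf : continuous f.
  move=> t; rewrite /f.
  apply: (continuous_comp (f := fun s : R => h (x + s *: (y - x)))
                      (g := fun M : vec => M ord0 j)); last exact: coord_continuous.
  apply: (continuous_comp (f := fun s : R => x + s *: (y - x)) (g := h)); last exact: ch.
  apply: continuousD; first exact: cst_continuous.
  exact: (@continuousZl _ _ _ id).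
have := @cont01_int_const f (continuous_subspaceT cf) (fun t _ => hi _ j).
by rewrite /f scale0r addr0 scale1r addrC subrK.
Qed.


Implicit Types (a b n v y x : vec).

Definition ir (k : 'rV[int]_3) : vec := map_mx intr k.
Definition toZ (v : vec) : 'rV[int]_3 := map_mx (@Num.floor R) v.

Lemma toZK v : intvec v -> ir (toZ v) = v.
Proof. by move=> hv; apply/matrixP => i j; rewrite [i]ord1 !mxE floorK. Qed.

Lemma intvec_ir k : intvec (ir k).
Proof. by move=> j; rewrite mxE rpred_int. Qed.

Lemma intvec0 : intvec (0 : vec).
Proof. by move=> j; rewrite mxE rpred0. Qed.

Lemma intvecD a b : intvec a -> intvec b -> intvec (a + b).
Proof. by move=> ha hb j; rewrite mxE rpredD. Qed.

Lemma intvecN a : intvec a -> intvec (- a).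
Proof. by move=> ha j; rewrite mxE rpredN. Qed.

Lemma intvecB a b : intvec a -> intvec b -> intvec (a - b).
Proof. by move=> ha hb; apply: intvecD => //; apply: intvecN. Qed.

Lemma irD (a b : 'rV[int]_3) : ir (a + b) = ir a + ir b.
Proof. exact: map_mxD. Qed.
Lemma irN (a : 'rV[int]_3) : ir (- a) = - ir a.
Proof. exact: map_mxN. Qed.
Lemma irB (a b : 'rV[int]_3) : ir (a - b) = ir a - ir b.
Proof. exact: map_mxB. Qed.
Lemma irM (a : 'rV[int]_3) (M : 'M[int]_3) : ir (a *m M) = ir a *m map_mx intr M.
Proof. exact: map_mxM. Qed.

Definition phi (H : vec -> vec) (n : vec) := H n - H 0.

Section PhiH.
Variable H : vec -> vec.
Hypothesis cH : continuous H.
Hypothesis dH : descends H.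

Lemma shift_const n : intvec n -> forall y, H (y + n) = H y + phi H n.
Proof.
move=> hn y.
have := @cont_int_vec_const (fun y => H (y + n) - H y) _ _ y 0.
rewrite add0r /phi => <-; first by rewrite [RHS]addrC subrK.
  move=> z; apply: continuousB; last exact: cH.
  apply: (continuous_comp (f := fun y : vec => y + n) (g := H)); last exact: cH.
  by apply: (@continuousD R vec vec id (fun=> n) z); [exact: cvg_id | exact: cst_continuous].
by move=> z; apply: dH.
Qed.

Lemma intvec_phi n : intvec n -> intvec (phi H n).
Proof. by move=> hn; have := dH 0 hn; rewrite add0r. Qed.

Lemma phi0 : phi H 0 = 0.
Proof. exact: subrr. Qed.

Lemma phiD a b : intvec a -> intvec b -> phi H (a + b) = phi H a + phi H b.
Proof. by move=> ha hb; rewrite {1}/phi shift_const // /phi addrAC. Qed.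

Lemma phiN a : intvec a -> phi H (- a) = - phi H a.
Proof.
move=> ha; apply/eqP; rewrite -subr_eq0 opprK -phiD //; last exact: intvecN.
rewrite addNr phi0 ?eqxx //; exact: (intvecN ha).
Qed.

Lemma phiB a b : intvec a -> intvec b -> phi H (a - b) = phi H a - phi H b.
Proof. by move=> ha hb; rewrite phiD //; [rewrite phiN | exact: intvecN]. Qed.

End PhiH.


Definition Lam (A : 'M[int]_3) (v : vec) := exists k : 'rV[int]_3, v = ir (k *m A).

Lemma Lam0 A : Lam A 0.
Proof. by exists 0; rewrite mul0mx /ir map_mx0. Qed.

Lemma LamD A v w : Lam A v -> Lam A w -> Lam A (v + w).
Proof. by move=> [k ->] [k' ->]; exists (k + k'); rewrite mulmxDl irD. Qed.

Lemma LamN A v : Lam A v -> Lam A (- v).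
Proof. by move=> [k ->]; exists (- k); rewrite mulNmx irN. Qed.

Lemma LamB A v w : Lam A v -> Lam A w -> Lam A (v - w).
Proof. by move=> hv hw; apply: LamD => //; apply: LamN. Qed.

Section Main.
Variables (F G Ginv : vec -> vec) (L : 'M[int]_3).
Hypotheses (cF : continuous F) (cG : continuous G) (dG : descends G)
  (cGi : continuous Ginv) (dGi : descends Ginv)
  (GK : cancel G Ginv) (GiK : cancel Ginv G)
  (lpF : linear_part F L) (comm : same_torus_map (F \o G) (G \o F)).

Local Notation Lr := (map_mx (intr : int -> R) L).
Local Notation A := (L - 1%:M).
Local Notation phG := (phi G).
Local Notation psG := (phi Ginv).

Lemma intvec_mulLr v : intvec v -> intvec (v *m Lr).
Proof. by move=> hv; rewrite -(toZK hv) -irM; apply: intvec_ir. Qed.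

Lemma F_shift x v : intvec v -> F (x + v) = F x + v *m Lr.
Proof. by move=> hv; rewrite -(toZK hv) lpF map_mxM. Qed.

Definition mm := F (G 0) - G (F 0).

Lemma intvec_mm : intvec mm.
Proof. exact: comm. Qed.

Lemma FG_comm x : F (G x) = G (F x) + mm.
Proof.
have := @cont_int_vec_const (fun x => F (G x) - G (F x)) _ _ x 0.
rewrite /mm => <-; first by rewrite addrC subrK.
  move=> z; apply: (@continuousB R vec vec (F \o G) (G \o F) z).
    by apply: continuous_comp; [exact: cG | exact: cF].
  by apply: continuous_comp; [exact: cF | exact: cG].
by move=> z; apply: comm.
Qed.

Lemma phi_Lr n : intvec n -> phG (n *m Lr) = phG n *m Lr.
Proof.
move=> hn.
have h1 : F (G n) = G (F 0) + mm + phG n *m Lr.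
  rewrite -{1}[n]add0r (shift_const cG dG) // F_shift; last exact: intvec_phi.
  by rewrite (FG_comm 0).
have h2 : F (G n) = G (F 0) + phG (n *m Lr) + mm.
  rewrite FG_comm -{1}[n]add0r F_shift // (shift_const cG dG) ?add0r //.
  exact: intvec_mulLr.
apply: (addrI (G (F 0) + mm)); by rewrite addrAC -h2 h1.
Qed.


Lemma psi_phi n : intvec n -> psG (phG n) = n.
Proof.
move=> hn.
have := (shift_const cGi dGi (intvec_phi dG hn) (G 0)).
by rewrite -(shift_const cG dG) // !GK !add0r => /esym.
Qed.

Lemma phi_psi n : intvec n -> phG (psG n) = n.
Proof.
move=> hn.
have := (shift_const cG dG (intvec_phi dGi hn) (Ginv 0)).
by rewrite -(shift_const cGi dGi) // !GiK !add0r => /esym.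
Qed.

Lemma psi_Lr n : intvec n -> psG (n *m Lr) = psG n *m Lr.
Proof.
move=> hn; have hp := intvec_phi dGi hn.
rewrite -{1}(phi_psi hn) -phi_Lr // psi_phi //; exact: intvec_mulLr.
Qed.

Lemma mulA_Lr (k : 'rV[int]_3) : ir (k *m A) = ir k *m Lr - ir k.
Proof. by rewrite irM map_mxB map_mx1 mulmxBr mulmx1. Qed.

Lemma Lam_phi v : Lam A v -> Lam A (phG v).
Proof.
move=> [k ->]; exists (toZ (phG (ir k))).
have hk := intvec_ir k.
rewrite !mulA_Lr toZK; last exact: (intvec_phi dG).
rewrite (phiB cG dG) //; last exact: intvec_mulLr.
by rewrite phi_Lr.
Qed.

Lemma Lam_psi v : Lam A v -> Lam A (psG v).
Proof.
move=> [k ->]; exists (toZ (psG (ir k))).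
have hk := intvec_ir k.
rewrite !mulA_Lr toZK; last exact: (intvec_phi dGi).
rewrite (phiB cGi dGi) //; last exact: intvec_mulLr.
by rewrite psi_Lr.
Qed.

Lemma intvec_iter_phi i v : intvec v -> intvec (iter i phG v).
Proof. by move=> hv; elim: i => //= i IH; apply: intvec_phi. Qed.

Lemma Lam_iter_psi i v : Lam A v -> Lam A (iter i psG v).
Proof. by move=> hv; elim: i => //= i IH; apply: Lam_psi. Qed.

Lemma psi_phi_iter i v : intvec v -> iter i psG (iter i phG v) = v.
Proof.
move=> hv; elim: i => [//|i IH].
rewrite iterSr [iter i.+1 phG v]iterS psi_phi //; exact: intvec_iter_phi.
Qed.

Fixpoint cs (l : nat) : vec := if l is l'.+1 then phG (cs l') + mm else 0.

Lemma intvec_cs l : intvec (cs l).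
Proof.
elim: l => [|l IH] /=; first exact: intvec0.
by apply: intvecD; [apply: intvec_phi | apply: intvec_mm].
Qed.

Lemma F_iter l x : F (iter l G x) = iter l G (F x) + cs l.
Proof.
elim: l => [|l IH] /=; first by rewrite addr0.
by rewrite FG_comm IH (shift_const cG dG) ?addrA //; exact: intvec_cs.
Qed.

Lemma cs_add i l : cs (i + l) = iter i phG (cs l) + cs i.
Proof.
elim: i => [|i IH] /=; first by rewrite addr0.
rewrite IH (phiD cG dG) ?addrA //; last exact: intvec_cs.
exact: intvec_iter_phi (intvec_cs _).
Qed.

Lemma Lam_cs_diff i j : (i <= j)%N -> Lam A (cs j - cs i) -> Lam A (cs (j - i)).
Proof.
move=> lij; rewrite -{1}(subnKC lij) cs_add addrK => h.
rewrite -(psi_phi_iter i (intvec_cs (j - i))).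
exact: Lam_iter_psi.
Qed.

Lemma Ghat_exists l : Lam A (cs l) ->
  exists Ghat, same_torus_map Ghat (iter l G) /\ forall x, F (Ghat x) = Ghat (F x).
Proof.
move=> [k hk]; exists (fun x => iter l G x - ir k); split.
  by move=> x; rewrite /= addrC addKr; apply: intvecN; apply: intvec_ir.
move=> x; rewrite F_shift; last by apply: intvecN; apply: intvec_ir.
rewrite F_iter hk mulA_Lr.
by rewrite mulNmx addrA addrAC addrK.
Qed.

End Main.

Lemma homotopy_phi (G : vec -> vec) : continuous G -> homotopic_to_id G ->
  forall n, intvec n -> phi G n = n.
Proof.
move=> cG [Hom [cH dHt h0 h1]] n hn.
set I := [set p : R * vec | 0 <= p.1 <= 1].
have cHt : forall t : R, 0 <= t <= 1 -> continuous (fun x => Hom (t, x)).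
  move=> t t01; apply/continuous_subspace_setT.
  apply: (@within_comp_pt _ _ _ setT I (fun x : vec => (t, x)) Hom) => //.
  move=> x; apply: (@cvg_pair _ _ _ _ (nbhs t) (nbhs x)); [exact: (nbhs_filter x) | exact: (@cvg_cst _ t _ (nbhs x) (nbhs_filter x)) | exact: cvg_id].
have e0 : Hom (0, n) - Hom (0, 0) = n.
  have := @cont_int_vec_const (fun x => Hom (0, x) - x) _ h0 n 0.
  rewrite subr0 => <-; first by rewrite opprB addrC subrK.
  move=> x; apply: continuousB; last exact: cvg_id.
  by apply: cHt; rewrite lexx ler01.
have e1 : Hom (1, n) - Hom (1, 0) = phi G n.
  have c1x : continuous (fun x => Hom (1, x) - G x).
    move=> x; apply: continuousB; last exact: cG.
    by apply: cHt; rewrite lexx ler01.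
  have h := @cont_int_vec_const (fun x => Hom (1, x) - G x) c1x h1 n 0.
  have -> : Hom (1, n) = Hom (1, 0) - G 0 + G n by rewrite -h subrK.
  by rewrite /phi addrAC (addrAC (Hom (1, 0))) subrr add0r addrC.
have wt : forall x, {within `[0, 1], continuous (fun t : R => Hom (t, x))}.
  move=> x.
  have ce : continuous (fun t : R => (t, x)).
    move=> t; apply: (@cvg_pair _ _ _ _ (nbhs t) (nbhs x));
      try exact: (nbhs_filter t); try exact: cvg_id.
    exact: (@cvg_cst _ x _ (nbhs t) (nbhs_filter t)).
  have AB : forall t : R, `[0, 1]%classic t -> I (t, x).
    by move=> t; rewrite /= in_itv /=.
  exact (within_comp_pt ce AB cH).
apply/matrixP => i j; rewrite [i]ord1.
pose f := fun t : R => ((Hom (t, n) - Hom (t, 0)) ord0 j : R).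
have wf : {within `[0, 1], continuous f}.
  apply/subspace_continuousP => t t01.
  have hn1 := wt n; move/subspace_continuousP in hn1; move: (hn1 t t01) => {}hn1.
  have hn0 := wt 0; move/subspace_continuousP in hn0; move: (hn0 t t01) => {}hn0.
  have h3 := @cvgB _ _ _ _ (within_filter `[0, 1]%classic (nbhs_filter t)) _ _ _ _ hn1 hn0.
  exact (continuous_cvg _ (@coord_continuous R 1 3 ord0 j _) h3).
have fi : forall t, t \in `[0, 1] -> f t \is a Num.int.
  move=> t; rewrite in_itv /= => t01.
  by have := dHt t t01 0 n hn; rewrite add0r; apply.
have := cont01_int_const wf fi.
by rewrite /f e0 e1.
Qed.

Lemma irMn (k : 'rV[int]_3) l : ir (k *+ l) = ir k *+ l.
Proof.
elim: l => [|l IH]; first by rewrite !mulr0n /ir map_mx0.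
by rewrite !mulrS irD IH.
Qed.

End Aux.

Unset Implicit Arguments.
Set Strict Implicit.

Theorem mainTheorem6 (R : realType) (F : 'rV[R]_3 -> 'rV[R]_3) (L : 'M[int]_3) :
  diff1_lift F -> part_hyp F -> linear_part F L -> anosov_mx L ->
  forall G : 'rV[R]_3 -> 'rV[R]_3,
    diff1_lift G ->
    same_torus_map (F \o G) (G \o F) ->
    (exists (l : nat) (Ghat : 'rV[R]_3 -> 'rV[R]_3),
        [/\ (0 < l)%N, (l <= `|\det (L - 1%:M)|)%N,
            same_torus_map Ghat (iter l G) &
            forall x, F (Ghat x) = Ghat (F x)])
    /\
    (homotopic_to_id G ->
     exists (l : nat) (Ghat : 'rV[R]_3 -> 'rV[R]_3),
        [/\ (0 < l)%N, (l %| `|\det (L - 1%:M)|)%N,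
            same_torus_map Ghat (iter l G) &
            forall x, F (Ghat x) = Ghat (F x)]).
Proof.
move=> [Finv [_ _ [[dF _] _] _]] _ lpF an G [Ginv [GK GiK [[dGd _] [dGid _]] [dG dGi]]] comm.
have cF : continuous F by move=> x; exact: differentiable_continuous.
have cG : continuous G by move=> x; exact: differentiable_continuous.
have cGi : continuous Ginv by move=> x; exact: differentiable_continuous.
have dA := anosov_det an.
split.
  have [i [j [/andP[lij ljd] [k hk]]]] := pigeon (fun l => toZ (cs F G l)) dA.
  have hL : Lam (L - 1%:M) (cs F G j - cs F G i).
    exists k; rewrite -hk irB !toZK //; exact: intvec_cs.
  have := Lam_cs_diff cF cG dG cGi dGi GK GiK lpF comm (ltnW lij) hL.
  move=> /(Ghat_exists cF cG dG lpF comm) [Gh [h1 h2]].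
  exists (j - i)%N, Gh; split => //; first by rewrite subn_gt0.
  exact: leq_trans (leq_subr _ _) ljd.
move=> hom; have ph := homotopy_phi cG hom.
set d := `|\det (L - 1%:M)|%N.
have ecs : forall l, cs F G l = mm F G *+ l.
  elim=> [|l IH] /=; first by rewrite mulr0n.
  rewrite ph; last exact: intvec_cs.
  by rewrite IH mulrSr.
have hL : Lam (L - 1%:M) (cs F G d).
  rewrite ecs -(toZK (intvec_mm comm)) -irMn.
  exists ((sgz (\det (L - 1%:M))) *: (toZ (mm F G) *m \adj (L - 1%:M))).
  congr ir.
  by rewrite -scalemxAl -mulmxA mul_adj_mx mul_mx_scalar scalerA -abszEsg -natz scaler_nat.
have [Gh [h1 h2]] := Ghat_exists cF cG dG lpF comm hL.
exists d, Gh; split => //; by rewrite absz_gt0.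
Qed.
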